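(* Let $B$ be a monoid, let $r\ge1$, let $A=B\langle x_0,\dots,x_r\rangle$ and $X=\operatorname{MProj}(A)$. Then for every integer $n$, $\Gamma_*(\mathcal{O}_X(n))=A(n)$ as graded $A$-modules, where $\Gamma_*(\mathcal{F})=\bigoplus_{m\in\mathbb{Z}}\Gamma(X,\mathcal{F}(m))$.
   Context: A monoid is a commutative associative monoid with identity $1$ and absorbing element $0$; modules over it are pointed sets with a compatible action, and $\bigoplus$ denotes wedge sum. $B\langle x_0,\dots,x_r\rangle$ is the graded monoid with $A_0=B$ and $A_n=\{b\,x_0^{i_0}\cdots x_r^{i_r}: b\in B,\ i_j\ge0,\ \sum i_j=n\}$ (so $A_n$ consists only of $0$ for $n<0$), with the obvious multiplication. $X=\operatorname{MProj}(A)$ is the set of prime ideals not containing $A_{\ge1}$, covered by $D_+(x_i)\cong\operatorname{MSpec}(A_{(x_i)})$, where $A_{(f)}$ is the degree-$0$ part of the localization $A_f$. $A(n)$ is the graded module with $A(n)_i=A_{i+n}$, $\mathcal{O}_X(n)=\widetilde{A(n)}$ (sections on $D_+(f)$ are the degree-$n$ elements of $A_f$), and $\mathcal{F}(m)=\mathcal{F}\otimes_{\mathcal{O}_X}\mathcal{O}_X(m)$. $\Gamma_*(\mathcal{F})$ is the graded $A$-module with $\Gamma(X,\mathcal{F}(m))$ in degree $m$, where $a\in A_i$ acts via $a\in\Gamma(X,\mathcal O_X(i))$ and $\mathcal F(m)\otimes\mathcal O_X(i)\cong\mathcal F(m+i)$. *)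

(* Defs.v *)
From mathcomp Require Import all_boot all_algebra.
Set Implicit Arguments.
Unset Strict Implicit.
Unset Printing Implicit Defensive.
Import GRing.Theory Num.Theory.
Local Open Scope ring_scope.

Record cmonoid0 := CMonoid0 {
  mcar :> Type;
  mmul : mcar -> mcar -> mcar;
  mone : mcar;
  mzero : mcar;
  mmulA : forall x y z, mmul x (mmul y z) = mmul (mmul x y) z;
  mmulC : forall x y, mmul x y = mmul y x;
  mmul1 : forall x, mmul mone x = x;
  mmul0 : forall x, mmul mzero x = mzero }.

Section MonoidProj.
Variables (B : cmonoid0) (r : nat).

(* Representatives  b x_0^{e_0} ... x_r^{e_r}  of elements of A = B<x_0,...,x_r>. *)
Record pmon := PMon { pcoef : B; pexp : {ffun 'I_r.+1 -> nat} }.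

(* Equality in A: all representatives with coefficient 0 are identified (the
   element 0), otherwise representatives are equal iff identical. *)
Definition peq (a c : pmon) : Prop :=
  (pcoef a = mzero B /\ pcoef c = mzero B) \/ a = c.

Definition pmul (a c : pmon) : pmon :=
  PMon (mmul (pcoef a) (pcoef c)) [ffun i => (pexp a i + pexp c i)%N].
Definition pone : pmon := PMon (mone B) [ffun => 0%N].

Definition pdeg (a : pmon) : nat := (\sum_(i < r.+1) pexp a i)%N.

(* a lies in A_k (k an integer); A_k = {0} for k < 0. *)
Definition phomog (k : int) (a : pmon) : Prop :=
  pcoef a = mzero B \/ (pdeg a)%:Z = k.

Definition prime_ideal (P : pmon -> Prop) : Prop :=
  [/\ forall a c, peq a c -> P a -> P c,
      forall a, pcoef a = mzero B -> P a,
      forall a c, P a -> P (pmul a c),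
      ~ P pone &
      forall a c, P (pmul a c) -> P a \/ P c].

Definition mproj_pt (P : pmon -> Prop) : Prop :=
  prime_ideal P /\ exists a, (1 <= pdeg a)%N /\ ~ P a.

(* Zariski open set X \ V(S) determined by a subset S of A. *)
Definition in_open (S : pmon -> Prop) (P : pmon -> Prop) : Prop :=
  exists s, S s /\ ~ P s.

(* Element a/f of the homogeneous localization A(k)_(P) (degree k part). *)
Definition frac_ok (k : int) (P : pmon -> Prop) (x : pmon * pmon) : Prop :=
  ~ P x.2 /\ phomog (k + (pdeg x.2)%:Z)%R x.1.

Definition frac_eq (P : pmon -> Prop) (x y : pmon * pmon) : Prop :=
  exists g, ~ P g /\ peq (pmul g (pmul x.1 y.2)) (pmul g (pmul y.1 x.2)).

(* Global sections of O_X(k) = (A(k))~ (Hartshorne-style definition): a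
   function assigning to each point P an element of A(k)_(P), locally given by
   a single fraction a/f on an open neighbourhood. *)
Definition global_section (k : int) (s : (pmon -> Prop) -> pmon * pmon) : Prop :=
  (forall P, mproj_pt P -> frac_ok k P (s P)) /\
  (forall P, mproj_pt P ->
     exists S a f, in_open S P /\ phomog (k + (pdeg f)%:Z)%R a /\
       forall Q, mproj_pt Q -> in_open S Q ->
         ~ Q f /\ frac_eq Q (s Q) (a, f)).

Definition sec_eq (s t : (pmon -> Prop) -> pmon * pmon) : Prop :=
  forall P, mproj_pt P -> frac_eq P (s P) (t P).

Definition nat_sec (a : pmon) : (pmon -> Prop) -> pmon * pmon :=
  fun _ => (a, pone).

Definition sec_act (c : pmon) (s : (pmon -> Prop) -> pmon * pmon) :
  (pmon -> Prop) -> pmon * pmon :=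
  fun P => (pmul c (s P).1, (s P).2).

End MonoidProj.

(* Main.v *)
From HB Require Import structures.
Require Import Defs.
From mathcomp Require Import all_boot all_algebra.
From Stdlib Require Import Classical.
From mathcomp Require Import zify.
Import GRing.Theory Num.Theory.
Set Implicit Arguments.
Unset Strict Implicit.
Unset Printing Implicit Defensive.

Lemma mmulA' (B : cmonoid0) : associative (@mmul B). Proof. exact: mmulA. Qed.
HB.instance Definition _ (B : cmonoid0) := Monoid.isComLaw.Build (mcar B) (mone B) (@mmul B) (@mmulA' B) (@mmulC B) (@mmul1 B).
Section H.
Variables (B : cmonoid0) (r : nat).
Local Notation pm := (pmon B r).
Local Notation "x * y" := (@mmul B x y).

Lemma mmul0r (x : B) : x * mzero B = mzero B.
Proof. by rewrite mmulC mmul0. Qed.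
Lemma mmul1r (x : B) : x * mone B = x.
Proof. by rewrite mmulC mmul1. Qed.
Lemma mmulCA (x y z : B) : x * (y * z) = y * (x * z).
Proof. by rewrite !mmulA (mmulC x y). Qed.

Lemma pmon_eq (a c : pm) : pcoef a = pcoef c -> (forall j, pexp a j = pexp c j) -> a = c.
Proof. case: a c => ca ea [cc ec] /= E H; rewrite E; congr PMon; exact/ffunP. Qed.

Lemma pexpM (a c : pm) j : pexp (pmul a c) j = (pexp a j + pexp c j)%N.
Proof. by rewrite /pmul /= ffunE. Qed.

Lemma pmulC (a c : pm) : pmul a c = pmul c a.
Proof. apply: pmon_eq => [|j]; first exact: mmulC. by rewrite !pexpM addnC. Qed.
Lemma pmulA (a c d : pm) : pmul a (pmul c d) = pmul (pmul a c) d.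
Proof. apply: pmon_eq => [|j]; first exact: mmulA. by rewrite !pexpM addnA. Qed.
Lemma pmul1 (a : pm) : pmul (pone B r) a = a.
Proof. apply: pmon_eq => [|j]; first exact: mmul1. by rewrite !pexpM /pone /= ffunE. Qed.
Lemma pmulr1 (a : pm) : pmul a (pone B r) = a.
Proof. by rewrite pmulC pmul1. Qed.
Lemma pmulCA (a c d : pm) : pmul a (pmul c d) = pmul c (pmul a d).
Proof. by rewrite !pmulA (pmulC a c). Qed.

Lemma peq_refl (a : pm) : peq a a. Proof. by right. Qed.
Lemma peq_sym (a c : pm) : peq a c -> peq c a.
Proof. rewrite /peq; case=> [[Ha Hc]|->]; [by left|by right]. Qed.
Lemma peq_trans (a c d : pm) : peq a c -> peq c d -> peq a d.
Proof.
rewrite /peq; case=> [[Ha Hc]|->] //; case=> [[_ Hd]|<-]; by left.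
Qed.
Lemma peqM (d a c : pm) : peq a c -> peq (pmul d a) (pmul d c).
Proof. rewrite /peq; case=> [[Ha Hc]|->]; last by right. by left; rewrite /= Ha Hc !mmul0r. Qed.

Definition unit (c : B) := exists v, v * c = mone B.

Lemma unit_mul (x y : B) : unit x -> unit y -> unit (x * y).
Proof. move=> [v Hv] [w Hw]; exists (w * v). by rewrite -mmulA (mmulA v) Hv mmul1. Qed.
Lemma unit_mull (x y : B) : unit (x * y) -> unit x.
Proof. move=> [v Hv]; exists (v * y). by rewrite -mmulA (mmulC y). Qed.
Lemma unit_cancel (u x y : B) : unit u -> u * x = u * y -> x = y.
Proof. move=> [v Hv] E. by rewrite -(mmul1 x) -(mmul1 y) -Hv -!mmulA E. Qed.
Lemma unit_zero (u x : B) : unit u -> u * x = mzero B -> x = mzero B.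
Proof. move=> [v Hv] E. by rewrite -(mmul1 x) -Hv -mmulA E mmul0r. Qed.

Lemma pmul_cancel (g a c : pm) : unit (pcoef g) -> pmul g a = pmul g c -> a = c.
Proof.
move=> U E; apply: pmon_eq => [|j].
  apply: (unit_cancel U); exact: (f_equal (@pcoef B r) E).
have := f_equal (fun x => pexp x j) E; rewrite !pexpM; exact: addnI.
Qed.

Lemma frac_eq_refl (P : pm -> Prop) x : prime_ideal P -> frac_eq P x x.
Proof. case=> _ _ _ H1 _; exists (pone B r); split => //; exact: peq_refl. Qed.
Lemma frac_eq_sym (P : pm -> Prop) x y : frac_eq P x y -> frac_eq P y x.
Proof. case=> g [Hg E]; exists g; split => //; exact: peq_sym. Qed.
Lemma frac_eq_trans (P : pm -> Prop) x y z : prime_ideal P -> ~ P y.2 ->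
  frac_eq P x y -> frac_eq P y z -> frac_eq P x z.
Proof.
case=> _ _ _ _ Hpr Hy [g [Hg E1]] [h [Hh E2]].
exists (pmul (pmul g h) y.2); split.
  by move/Hpr=> [/Hpr [] |].
apply: (@peq_trans _ (pmul (pmul h z.2) (pmul g (pmul y.1 x.2)))).
  have -> : pmul (pmul (pmul g h) y.2) (pmul x.1 z.2) = pmul (pmul h z.2) (pmul g (pmul x.1 y.2)).
    apply: pmon_eq => [|j]; last by rewrite !pexpM; lia.
    by rewrite /= [LHS](AC (3*2) ((2*5)*(1*(4*3)))).
  exact: peqM.
apply: (@peq_trans _ (pmul (pmul g x.2) (pmul h (pmul z.1 y.2)))).
  have -> : pmul (pmul h z.2) (pmul g (pmul y.1 x.2)) = pmul (pmul g x.2) (pmul h (pmul y.1 z.2)).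
    apply: pmon_eq => [|j]; last by rewrite !pexpM; lia.
    by rewrite /= [LHS](AC (2*(1*2)) ((3*5)*(1*(4*2)))).
  exact: peqM.
right; apply: pmon_eq => [|j]; last by rewrite !pexpM; lia.
by rewrite /= [LHS](AC (2*(1*2)) (((1*3)*5)*(4*2))).
Qed.

Definition PT (T : pred 'I_r.+1) (a : pm) : Prop :=
  ~ unit (pcoef a) \/ exists j, ~~ T j /\ (0 < pexp a j)%N.

Lemma unit0 : mone B <> mzero B -> ~ unit (mzero B).
Proof. move=> N [v Hv]; apply: N; by rewrite -Hv mmul0r. Qed.

Lemma PT_prime (T : pred 'I_r.+1) : mone B <> mzero B -> prime_ideal (PT T).
Proof.
move=> N; split.
- move=> a c; rewrite /peq; case=> [[_ Hc]|<-] // _; left; rewrite Hc; exact: unit0.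
- move=> a Ha; left; rewrite Ha; exact: unit0.
- move=> a c [Hu|[j [Tj Hj]]].
    by left=> /unit_mull.
  right; exists j; split => //; rewrite pexpM; lia.
- case=> [|[j [_]]]; first by apply; exists (mone B); exact: mmul1.
  by rewrite /pone /= ffunE.
- move=> a c [Hu|[j [Tj Hj]]].
    apply: NNPP => H; apply: Hu; apply: unit_mul.
      by apply: NNPP => H'; apply: H; left; left.
    by apply: NNPP => H'; apply: H; right; left.
  rewrite pexpM in Hj.
  case: (posnP (pexp a j)) => Ha.
    by right; right; exists j; split => //; lia.
  by left; right; exists j.
Qed.

Definition X (i : 'I_r.+1) : pm := PMon (mone B) [ffun k => nat_of_bool (k == i)].

Lemma pdegX i : pdeg (X i) = 1%N.
Proof.
rewrite /pdeg (bigD1 i) //= ffunE eqxx big1 // => j Hj; by rewrite ffunE (negbTE Hj).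
Qed.

Lemma PT_pt (T : pred 'I_r.+1) t : mone B <> mzero B -> T t -> mproj_pt (PT T).
Proof.
move=> N Tt; split; first exact: PT_prime.
exists (X t); rewrite pdegX; split => //.
case=> [|[j [Tj]]]; first by apply; exists (mone B); exact: mmul1.
rewrite ffunE; case: eqP => [Ej|] //; by rewrite Ej Tt in Tj.
Qed.

Lemma notPT (T : pred 'I_r.+1) a : ~ PT T a -> unit (pcoef a) /\ forall j, ~~ T j -> pexp a j = 0%N.
Proof.
move=> H; split; first by apply: NNPP => H'; apply: H; left.
move=> j Tj; apply: NNPP => H'; apply: H; right; exists j; split => //; lia.
Qed.

Lemma notPT_mono (T T' : pred 'I_r.+1) a : {subset T <= T'} -> ~ PT T a -> ~ PT T' a.
Proof.
move=> S /notPT [U Z]; case=> [//|[j [Tj Hj]]].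
have Tj' : ~~ T j by apply/negP => /S; apply/negP.
by rewrite Z in Hj.
Qed.


Lemma pt_X (Q : pm -> Prop) : mproj_pt Q -> exists i, ~ Q (X i).
Proof.
case=> [[_ _ Hid _ _] [a [Ha NQ]]].
have [j Hj] : exists j, (0 < pexp a j)%N.
  apply: NNPP => H; move: Ha; rewrite /pdeg big1 // => j _.
  apply/eqP; rewrite -leqn0 leqNgt; apply/negP => Hj; apply: H; by exists j.
exists j => HX; apply: NQ.
have -> : a = pmul (X j) (PMon (pcoef a) [ffun k => (pexp a k - (k == j))%N]).
  apply: pmon_eq => [|k]; first by rewrite /= mmul1.
  rewrite pexpM /= !ffunE; case: eqP => [->|] /=; lia.
exact: Hid.
Qed.

Lemma notQ_pow (Q : pm -> Prop) i : prime_ideal Q -> ~ Q (X i) ->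
  forall n y, unit (pcoef y) -> (forall j, j != i -> pexp y j = 0%N) -> pexp y i = n -> ~ Q y.
Proof.
case=> _ _ Hid H1 Hpr NX; elim=> [|n IH] y [v Hv] Z E.
  move=> Qy; apply: H1.
  have -> : pone B r = pmul y (PMon v [ffun=> 0%N]).
    apply: pmon_eq => [|j]; first by rewrite /= mmulC Hv.
    rewrite pexpM !ffunE /=; case: (eqVneq j i) => [->|/Z ->]; by rewrite ?E.
  exact: Hid.
move=> Qy.
have Ey : y = pmul (X i) (PMon (pcoef y) [ffun k => (pexp y k - (k == i))%N]).
  apply: pmon_eq => [|k]; first by rewrite /= mmul1.
  rewrite pexpM /= !ffunE; case: eqP => [->|] /=; rewrite ?E; lia.
rewrite Ey in Qy; case: (Hpr _ _ Qy) => // Qy'.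
apply: (IH _ _ _ _ Qy'); first by exists v.
  by move=> j Hj /=; rewrite ffunE Z.
by rewrite /= ffunE eqxx E; lia.
Qed.

Lemma notPi_notQ (Q : pm -> Prop) i s : prime_ideal Q -> ~ Q (X i) -> ~ PT (pred1 i) s -> ~ Q s.
Proof.
move=> PQ NX /notPT [U Z]; apply: (notQ_pow PQ NX) (erefl _) => //.
Qed.

Lemma pdegM (a c : pm) : pdeg (pmul a c) = (pdeg a + pdeg c)%N.
Proof. rewrite /pdeg -big_split; apply: eq_bigr => j _; by rewrite pexpM. Qed.

Lemma pdeg1 : pdeg (pone B r) = 0%N.
Proof. by rewrite /pdeg big1 // => j _; rewrite ffunE. Qed.

Lemma triv_all (x : B) : mone B = mzero B -> x = mzero B.
Proof. by move=> E; rewrite -(mmul1 x) E mmul0. Qed.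

Lemma no_pt (P : pm -> Prop) : mone B = mzero B -> ~ mproj_pt P.
Proof. by move=> E [[_ H0 _ H1 _] _]; apply: H1; apply: H0. Qed.

Lemma coef_nz (g a f : pm) : unit (pcoef g) -> unit (pcoef f) -> pcoef a <> mzero B ->
  pcoef (pmul g (pmul a f)) <> mzero B.
Proof.
move=> Ug Uf Na /= E; apply: Na; apply: (unit_zero Uf); rewrite mmulC.
exact: (unit_zero Ug).
Qed.

End H.

Unset Implicit Arguments.
Set Strict Implicit.

Theorem mainTheorem7 (B : cmonoid0) (r : nat) (hr : (1 <= r)%N) (n : int) :
  forall m : int,
    (forall a : pmon B r, phomog (n + m)%R a -> global_section (n + m)%R (nat_sec a)) /\
    (forall (i : int) (c a : pmon B r), phomog i c -> phomog (n + m)%R a ->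
       sec_eq (nat_sec (pmul c a)) (sec_act c (nat_sec a))) /\
    (forall a a' : pmon B r, phomog (n + m)%R a -> phomog (n + m)%R a' ->
       sec_eq (nat_sec a) (nat_sec a') -> peq a a') /\
    (forall s : (pmon B r -> Prop) -> pmon B r * pmon B r, global_section (n + m)%R s ->
       exists a : pmon B r, phomog (n + m)%R a /\ sec_eq s (nat_sec a)).
Proof.
move=> m; set k := (n + m)%R.
split.
  move=> a Ha; split.
    move=> P [[_ _ _ H1 _] _]; split => //=; by rewrite pdeg1 (addr0 k).
  move=> P PP; exists (fun x => x = pone B r), a, (pone B r).
  have NP1 : forall Q : pmon B r -> Prop, mproj_pt Q -> ~ Q (pone B r) by move=> Q [[]].
  split; first by exists (pone B r); split => //; exact: NP1.
  split; first by rewrite pdeg1 (addr0 k).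
  move=> Q PQ _; split; first exact: NP1.
  by apply: frac_eq_refl; case: PQ.
split.
  move=> i c a _ _ P [PP _]; exact: frac_eq_refl.
split.
  move=> a a' _ _ Hs.
  case: (classic (mone B = mzero B)) => [E|N].
    by left; split; apply: triv_all.
  have P0 : mproj_pt (PT (pred1 (@ord0 r))) := @PT_pt B r (pred1 ord0) ord0 N (eqxx _).
  case: (Hs _ P0) => g [/notPT [Ug _] /=]; rewrite !pmulr1.
  case=> [[E1 E2]|E].
    by left; split; apply: (unit_zero Ug).
  by right; exact: (pmul_cancel Ug E).
move=> s [Hok Hloc].
case: (classic (mone B = mzero B)) => [E|N].
  exists (PMon (mzero B) [ffun=> 0%N]); split; first by left.
  by move=> P /(no_pt E).
pose P_ := fun i : 'I_r.+1 => @PT B r (pred1 i).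
have PPi : forall i, mproj_pt (P_ i) := fun i => @PT_pt B r (pred1 i) i N (eqxx _).
pose R_ := fun i : 'I_r.+1 => @PT B r [pred j | (j == ord0) || (j == i)].
have PRi : forall i, mproj_pt (R_ i).
  by move=> i; apply: (@PT_pt B r _ ord0 N); rewrite /= ?inE ?eqxx.
have [S0 [a0 [f0 [[s0 [S0s0 Ns0]] [h0 H0]]]]] := Hloc _ (PPi ord0).
have [Nf0 _] := H0 _ (PPi ord0) (ex_intro _ s0 (conj S0s0 Ns0)).
have [Uf0 Zf0] := notPT Nf0.
have key : forall i S a f, in_open S (P_ i) ->
   (forall Q, mproj_pt Q -> in_open S Q -> ~ Q f /\ frac_eq Q (s Q) (a, f)) ->
   exists g, unit (pcoef g) /\ peq (pmul g (pmul a0 f)) (pmul g (pmul a f0)).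
  move=> i S a f [si [Ssi Nsi]] Hf.
  have inR0 : in_open S0 (R_ i).
    exists s0; split => //; apply: (notPT_mono _ Ns0) => j /=.
    by rewrite !inE => ->.
  have inRi : in_open S (R_ i).
    exists si; split => //; apply: (notPT_mono _ Nsi) => j /=.
    by rewrite !inE => ->; rewrite orbT.
  have [_ E0] := H0 _ (PRi i) inR0.
  have [_ Ei] := Hf _ (PRi i) inRi.
  have [Ns _] := Hok _ (PRi i).
  have PR := (PRi i).1.
  have := frac_eq_trans PR Ns (frac_eq_sym E0) Ei.
  case=> g [/notPT [Ug _] Eg]; exists g; split => //.
case: (classic (pcoef a0 = mzero B)) => [Z0|NZ0].
  exists a0; split; first by left.
  move=> Q PQ; have [i NXi] := pt_X PQ.
  have [Si [ai [fi [[si [Ssi Nsi]] [hi Hi]]]]] := Hloc _ (PPi i).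
  have inQ : in_open Si Q by exists si; split => //; exact: (notPi_notQ PQ.1 NXi Nsi).
  have [NQf EQ] := Hi _ PQ inQ.
  have [g [Ug Eg]] := key i Si ai fi (ex_intro _ si (conj Ssi Nsi)) Hi.
  have Zi : pcoef ai = mzero B.
    have : pcoef (pmul g (pmul ai f0)) = mzero B.
      case: Eg => [[_ ->]|<-] //. by rewrite /= Z0 mmul0 mmul0r.
    move=> /= /(unit_zero Ug) H; apply: (unit_zero Uf0); by rewrite mmulC.
  apply: (@frac_eq_trans _ _ _ _ (ai, fi) _ PQ.1 NQf EQ).
  exists (pone B r); split; first by case: PQ => [[]].
  by left; split; rewrite /= ?Zi ?Z0 ?mmul0 ?mmul0r.
pose i1 : 'I_r.+1 := @Ordinal r.+1 1 hr.
have [S1 [a1 [f1 [[s1 [Ss1 Ns1]] [h1 H1]]]]] := Hloc _ (PPi i1).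
have [Nf1 _] := H1 _ (PPi i1) (ex_intro _ s1 (conj Ss1 Ns1)).
have [Uf1 Zf1] := notPT Nf1.
have [g [Ug Eg]] := key i1 S1 a1 f1 (ex_intro _ s1 (conj Ss1 Ns1)) H1.
have E01 : pmul a0 f1 = pmul a1 f0.
  case: Eg => [[Ez _]|Ez]; last exact: (pmul_cancel Ug Ez).
  by case: (coef_nz Ug Uf1 NZ0).
have le0 : forall j, (pexp f0 j <= pexp a0 j)%N.
  move=> j; case: (eqVneq j ord0) => [->|Hj]; last by rewrite (Zf0 _ Hj).
  have := f_equal (fun x => pexp x ord0) E01; rewrite !pexpM (Zf1 ord0 isT); lia.
have [v0 Hv0] := Uf0.
pose a := PMon (mmul v0 (pcoef a0)) [ffun j => (pexp a0 j - pexp f0 j)%N].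
have Ha : pmul a f0 = a0.
  apply: pmon_eq => [|j]; last by rewrite pexpM ffunE; have := le0 j; lia.
  by rewrite /= -mmulA (mmulC (pcoef a0)) mmulA Hv0 mmul1.
exists a; split.
  right; case: h0 => [/NZ0 []|].
  by rewrite -Ha pdegM PoszD => /addIr.
move=> Q PQ; have [i NXi] := pt_X PQ.
have [Si [ai [fi [[si [Ssi Nsi]] [hi Hi]]]]] := Hloc _ (PPi i).
have inQ : in_open Si Q by exists si; split => //; exact: (notPi_notQ PQ.1 NXi Nsi).
have [NQf EQ] := Hi _ PQ inQ.
have [g' [Ug' Eg']] := key i Si ai fi (ex_intro _ si (conj Ssi Nsi)) Hi.
have [Nfi _] := Hi _ (PPi i) (ex_intro _ si (conj Ssi Nsi)).
have [Ufi _] := notPT Nfi.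
have E0i : pmul a0 fi = pmul ai f0.
  case: Eg' => [[Ez _]|Ez]; last exact: (pmul_cancel Ug' Ez).
  by case: (coef_nz Ug' Ufi NZ0).
have Eai : ai = pmul a fi.
  apply: (@pmul_cancel _ _ f0); first by exists v0.
  by rewrite (pmulC f0 ai) -E0i -Ha -pmulA pmulCA.
apply: (@frac_eq_trans _ _ _ _ (ai, fi) _ PQ.1 NQf EQ).
exists (pone B r); split; first by case: PQ => [[]].
by right; rewrite /= pmulr1 Eai.
Qed.
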